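(* Suppose that the penalties $\widehat C_1,\widehat C_2,\dots$ are such that, for some constant $\gamma>0$ and for all $k\ge 1$, $$\mathbb P\{\widehat C_k\le (L-\widehat L)(\hat f_k)\}\le \frac{\gamma}{n^2k^2}.$$ Then $$\mathbb E L(\hat f)-L^*\le \inf_{k\ge1}\bigl[L_k^*-L^*+\mathbb E\widehat C_k\bigr]+\frac{2\gamma}{n^2}.$$
   Context: Let $(X,Y)$ be a random pair taking values in $\mathbb R^d\times\{0,1\}$ with arbitrary distribution, and let $\mathcal D_n=((X_1,Y_1),\dots,(X_n,Y_n))$ be $n$ i.i.d. copies of $(X,Y)$, independent of $(X,Y)$. A classifier is a measurable map $f:\mathbb R^d\to\{0,1\}$. Its loss is $L(f)=\mathbb P\{f(X)\ne Y\}$ (for a classifier chosen from the data, $L(f)=\mathbb P\{f(X)\neq Y\mid\mathcal D_n\}$), its empirical loss is $\widehat L(f)=\frac1n\sum_{i=1}^n\mathbb I\{f(X_i)\ne Y_i\}$, and $(L-\widehat L)(f)=L(f)-\widehat L(f)$. Let $L^*=\inf_f L(f)$, the infimum over all classifiers. Let $\mathcal F_1,\mathcal F_2,\dots$ be fixed (non-random) classes of classifiers; $\hat f_k\in\mathcal F_k$ denotes a minimizer of $\widehat L$ over $\mathcal F_k$, and $L_k^*=\inf_{f\in\mathcal F_k}L(f)$. The penalties $\widehat C_k$, $k\ge1$, are nonnegative random variables that are measurable functions of $\mathcal D_n$. The penalized estimator is $\hat f=\hat f_{\hat k}$ where $\hat k\in\arg\min_{k\ge1}(\widehat L(\hat f_k)+\widehat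 C_k)$ (assumed to exist). All quantities are assumed measurable. *)

(* Defs.v *)
From HB Require Import structures.
From mathcomp Require Import all_boot all_order all_algebra.
From mathcomp Require Import all_classical all_reals all_analysis.
Set Implicit Arguments. Unset Strict Implicit. Unset Printing Implicit Defensive.
Import Order.TTheory GRing.Theory Num.Theory.
Local Open Scope classical_set_scope.
Local Open Scope ring_scope.

(* R^d is represented by d.-tuple R, carrying the product (= Borel)
   sigma-algebra generated by the coordinate projections (library instance). *)
Notation labpt R d := (d.-tuple R * bool)%type.

Section defs.
Variables (R : realType) (d : nat).

Definition classifier (f : d.-tuple R -> bool) : Prop := measurable_fun setT f.

Definition loss (mu : probability (labpt R d) R) (f : d.-tuple R -> bool) : R :=
  fine (mu [set z | f z.1 != z.2]).

Definition emp_loss n (s : n.-tuple (labpt R d)) (f : d.-tuple R -> bool) : R :=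
  n%:R^-1 * \sum_(i < n) (f (tnth s i).1 != (tnth s i).2)%:R.

Definition Lstar (mu : probability (labpt R d) R) : R :=
  inf [set loss mu f | f in classifier].

Definition Lclass (mu : probability (labpt R d) R) (F : set (d.-tuple R -> bool)) : R :=
  inf [set loss mu f | f in F].

Definition iid_sample (dO : measure_display) (Omega : measurableType dO)
  (P : probability Omega R) n (D : Omega -> n.-tuple (labpt R d))
  (mu : probability (labpt R d) R) : Prop :=
  (forall i : 'I_n, measurable_fun setT (fun w => tnth (D w) i)) /\
  (forall (i : 'I_n) (A : set (labpt R d)), measurable A ->
     P ((fun w => tnth (D w) i) @^-1` A) = mu A) /\
  (forall A : 'I_n -> set (labpt R d), (forall i, measurable (A i)) ->
     P (\bigcap_(i in [set: 'I_n]) ((fun w => tnth (D w) i) @^-1` A i)) =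
     (\prod_(i < n) P ((fun w => tnth (D w) i) @^-1` A i))%E).

End defs.

(* Main.v *)
Require Import Defs.
From HB Require Import structures.
From mathcomp Require Import all_boot all_order all_algebra.
From mathcomp Require Import all_classical all_reals all_analysis.
From mathcomp Require Import ring lra.
From mathcomp Require Import measurable_realfun.
Import Order.TTheory GRing.Theory Num.Theory.
Local Open Scope classical_set_scope.
Local Open Scope ring_scope.

Lemma classifier_meas (R : realType) d (f : d.-tuple R -> bool) :
  classifier f -> measurable [set z : labpt R d | f z.1 != z.2].
Proof.
move=> mf.
have mf1 : measurable_fun setT (f \o fst : labpt R d -> bool).
  exact: measurableT_comp mf measurable_fst.
have -> : [set z : labpt R d | f z.1 != z.2] =
  ((f \o fst) @^-1` [set true] `&` snd @^-1` [set false]) `|`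
  ((f \o fst) @^-1` [set false] `&` snd @^-1` [set true]).
  apply/seteqP; split => -[x b] /=; rewrite /preimage /=.
    by case: (f x); case: b => //= _; [left|right].
  by case: (f x); case: b => //= -[] [].
apply: measurableU; apply: measurableI.
- by rewrite -[X in measurable X]setTI; apply: mf1.
- by rewrite -[X in measurable X]setTI; apply: measurable_snd.
- by rewrite -[X in measurable X]setTI; apply: mf1.
- by rewrite -[X in measurable X]setTI; apply: measurable_snd.
Qed.

Lemma loss_mu (R : realType) d (mu : probability (labpt R d) R) f :
  classifier f -> mu [set z | f z.1 != z.2] = (loss mu f)%:E /\ 0 <= loss mu f <= 1.
Proof.
move=> /classifier_meas mA.
have h1 := probability_le1 mu mA.
have h0 := measure_ge0 mu [set z | f z.1 != z.2].
have fA : mu [set z | f z.1 != z.2] \is a fin_num by rewrite ge0_fin_numE// (le_lt_trans h1) // ltry.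
rewrite /loss fineK //; split => //.
by rewrite -!lee_fin fineK // h0 h1.
Qed.

Lemma emp_loss_ge0 (R : realType) d n (s : n.-tuple (labpt R d)) f : 0 <= emp_loss s f.
Proof. by rewrite /emp_loss mulr_ge0 // ?invr_ge0 // sumr_ge0. Qed.

Lemma loss_ge0 (R : realType) d (mu : probability (labpt R d) R) f : 0 <= loss mu f.
Proof. by rewrite /loss fine_ge0. Qed.

Lemma key_ineq (R : realType) (a : R) : 0 < a -> ((a + 1) ^+ 2)^-1 + (a + 1)^-1 <= a^-1.
Proof.
move=> a0.
have a1 : 0 < a + 1 by rewrite addr_gt0.
have e : a^-1 - (((a + 1) ^+ 2)^-1 + (a + 1)^-1) = (a * (a + 1) ^+ 2)^-1.
  by field; rewrite ?(gt_eqF a0) ?(gt_eqF a1).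
rewrite -subr_ge0 e invr_ge0; apply: mulr_ge0; first exact: ltW.
by apply: exprn_ge0; exact: ltW.
Qed.

Lemma sum_inv_sq (R : realType) N : \sum_(0 <= i < N) (((i.+1)%:R : R) ^+ 2)^-1 <= 2.
Proof.
have H m : \sum_(0 <= i < m.+1) (((i.+1)%:R : R) ^+ 2)^-1 + (m.+1%:R)^-1 <= 2.
  elim: m => [|m IH].
    rewrite big_nat1 expr1n invr1. by lra.
  rewrite big_nat_recr //= -addrA; apply: le_trans IH; rewrite lerD2l.
  rewrite -[m.+2]addn1 natrD; exact: key_ineq.
case: N => [|m]; first by rewrite big_geq.
apply: le_trans (H m); rewrite lerDl invr_ge0 //.
Qed.

Lemma series_bound (R : realType) (c : R) : 0 <= c ->
  (\sum_(0 <= j <oo) ((c * (((j.+1)%:R : R) ^+ 2)^-1)%:E) <= (2 * c)%:E)%E.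
Proof.
move=> c0; apply: lime_le.
  by apply: is_cvg_nneseries => j _ _; rewrite lee_fin mulr_ge0 // invr_ge0 exprn_ge0.
apply: nearW => N /=; rewrite sumEFin lee_fin -mulr_sumr mulrC.
by rewrite ler_wpM2r // sum_inv_sq.
Qed.

Lemma emp_int (R : realType) d n (dO : measure_display) (Omega : measurableType dO)
  (P : probability Omega R) (D : Omega -> n.-tuple (labpt R d))
  (mu : probability (labpt R d) R) f :
  (0 < n)%N -> iid_sample P D mu -> classifier f ->
  measurable_fun setT (fun w => emp_loss (D w) f) /\
  (\int[P]_w (emp_loss (D w) f)%:E = (loss mu f)%:E)%E.
Proof.
move=> n0 [iid1 [iid2 _]] cf.
have mA := @classifier_meas _ _ f cf.
have [muA _] := @loss_mu _ _ mu f cf.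
pose A := fun i : 'I_n => (fun w => tnth (D w) i) @^-1` [set z : labpt R d | f z.1 != z.2].
have mAi i : measurable (A i).
  by rewrite -[X in measurable X]setTI; apply: (iid1 i).
have e w : emp_loss (D w) f = n%:R^-1 * \sum_(i < n) \1_(A i) w.
  rewrite /emp_loss; congr (_ * _); apply: eq_bigr => i _.
  rewrite /indic; congr (_%:R); congr (nat_of_bool _).
  case: (boolP (w \in A i)) => [/set_mem h|/negP h]; first exact: h.
  apply/negbTE/negP => h'; apply: h; exact: mem_set.
have me : measurable_fun setT (fun w => emp_loss (D w) f).
  under eq_fun do rewrite e.
  apply: measurable_realfun.measurable_funM => //; apply: measurable_sum => i.
  exact: measurable_realfun.measurable_indic.
split => //.
under eq_integral do rewrite e EFinM -sumEFin.
have mAe i : measurable_fun setT (fun w => ((\1_(A i) w : R)%:E)).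
  by apply/measurable_EFinP; exact: measurable_realfun.measurable_indic.
have k0 : ((0 : \bar R) <= (n%:R^-1)%:E)%E by rewrite lee_fin invr_ge0.
have f0 : forall w, [set: Omega] w -> ((0 : \bar R) <= \sum_(i < n) (\1_(A i) w : R)%:E)%E.
  by move=> w _; rewrite sumEFin lee_fin sumr_ge0.
have msum : measurable_fun setT (fun w => \sum_(i < n) (\1_(A i) w : R)%:E).
  by apply: emeasurable_sum => i.
rewrite (ge0_integralZl P measurableT msum f0 k0).
rewrite ge0_integral_sum //.
under eq_bigr do rewrite integral_indic // setIT.
have PA i : P (A i) = (loss mu f)%:E by rewrite /A iid2 // muA.
rewrite (eq_bigr (fun _ => (loss mu f)%:E)); last by move=> i _; exact: PA.
rewrite sumEFin sumr_const card_ord -EFinM; congr (_%:E).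
by rewrite -[loss mu f *+ n]mulr_natr mulrCA mulVf ?mulr1 // pnatr_eq0 -lt0n.
Qed.

Theorem lemma2p1 (R : realType) (d n : nat) (dO : measure_display)
  (Omega : measurableType dO) (P : probability Omega R)
  (mu : probability (labpt R d) R)
  (D : Omega -> n.-tuple (labpt R d))
  (F : nat -> set (d.-tuple R -> bool))
  (fhat : nat -> n.-tuple (labpt R d) -> (d.-tuple R -> bool))
  (Chat : nat -> n.-tuple (labpt R d) -> R)
  (khat : n.-tuple (labpt R d) -> nat)
  (gamma : R) :
  (0 < n)%N ->
  iid_sample P D mu ->
  (forall k f, (0 < k)%N -> F k f -> classifier f) ->
  (forall k s, (0 < k)%N -> F k (fhat k s)) ->
  (forall k s f, (0 < k)%N -> F k f -> emp_loss s (fhat k s) <= emp_loss s f) ->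
  (forall k s, (0 < k)%N -> 0 <= Chat k s) ->
  (forall k, (0 < k)%N -> measurable_fun setT (fun w => Chat k (D w))) ->
  (forall k, (0 < k)%N -> measurable_fun setT (fun w => loss mu (fhat k (D w)))) ->
  (forall k, (0 < k)%N ->
     measurable_fun setT (fun w => emp_loss (D w) (fhat k (D w)))) ->
  (forall s, (0 < khat s)%N) ->
  (forall s k, (0 < k)%N ->
     emp_loss s (fhat (khat s) s) + Chat (khat s) s
       <= emp_loss s (fhat k s) + Chat k s) ->
  measurable_fun setT (fun w => loss mu (fhat (khat (D w)) (D w))) ->
  0 < gamma ->
  (forall k, (0 < k)%N ->
     (P [set w | (Chat k (D w) <= loss mu (fhat k (D w)) - emp_loss (D w) (fhat k (D w)))%R]
       <= (gamma / (n%:R ^+ 2 * k%:R ^+ 2))%:E)%E) ->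
  ('E_P[fun w => loss mu (fhat (khat (D w)) (D w))] - (Lstar mu)%:E
    <= ereal_inf [set ((Lclass mu (F k) - Lstar mu)%:E + 'E_P[fun w => Chat k (D w)])%E
                   | k in [set k | (0 < k)%N]]
       + (2 * gamma / n%:R ^+ 2)%:E)%E.
Proof.
move=> n0 iid Fcl fhF fmin C0 mC mL mE kh0 khmin mLk g0 hP.
set c := (2 * gamma / n%:R ^+ 2).
pose E j := [set w | Chat j (D w) <= loss mu (fhat j (D w)) - emp_loss (D w) (fhat j (D w))].
have mEj j : (0 < j)%N -> measurable (E j).
  move=> j0; rewrite -[E j]setTI; apply: measurable_fun_le => //.
  - exact: mC.
  - exact: measurable_funB (mL j j0) (mE j j0).
pose U := \bigcup_j E j.+1.
have mU : measurable U by apply: bigcupT_measurable => j; exact: mEj.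
have PU : (P U <= c%:E)%E.
  apply: le_trans (measure_sigma_subadditive P (F := fun j => E j.+1)
     (fun j => mEj j.+1 isT) mU (@subset_refl _ _)) _.
  have h1 : forall j, (0 <= j)%N -> xpredT j -> ((0 : \bar R) <= P (E j.+1))%E.
    by move=> j _ _; exact: measure_ge0.
  have h2 : forall j, xpredT j -> (P (E j.+1) <=
      ((gamma / n%:R ^+ 2) * (((j.+1)%:R : R) ^+ 2)^-1)%:E)%E.
    move=> j _; apply: le_trans (hP j.+1 isT) _.
    by rewrite lee_fin invfM mulrA.
  have h3 := lee_nneseries h1 h2.
  eapply le_trans; first exact: h3.
  have c0 : 0 <= gamma / n%:R ^+ 2 by rewrite divr_ge0 // ?ltW // exprn_ge0.
  have h4 := @series_bound _ _ c0.
  eapply le_trans; first exact: h4.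
  by rewrite /c mulrA.
have Lh01 s : 0 <= loss mu (fhat (khat s) s) <= 1.
  exact: (@loss_mu _ _ mu _ (Fcl _ _ (kh0 s) (fhF _ s (kh0 s)))).2.
have eE (X : Omega -> R) : ('E_P[X] = \int[P]_w (X w)%:E)%E by rewrite unlock.
pose s0 : n.-tuple (labpt R d) := nseq_tuple n (nseq_tuple d (0 : R), false).
set LH := ('E_P[_])%E.
have H k : (0 < k)%N ->
    (LH <= c%:E + ((Lclass mu (F k))%:E + 'E_P[fun w => Chat k (D w)]))%E.
  move=> k0.
  have I2 : (\int[P]_w (emp_loss (D w) (fhat k (D w)))%:E <= (Lclass mu (F k))%:E)%E.
    have J0 : (0 <= \int[P]_w (emp_loss (D w) (fhat k (D w)))%:E)%E.
      by apply: integral_ge0 => w _; rewrite lee_fin emp_loss_ge0.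
    have Jf f : F k f -> (\int[P]_w (emp_loss (D w) (fhat k (D w)))%:E <= (loss mu f)%:E)%E.
      move=> Ff; have [mef ief] := @emp_int _ _ _ _ _ P D mu f n0 iid (Fcl k f k0 Ff).
      rewrite -ief; apply: ge0_le_integral => //.
      - by move=> w _; rewrite lee_fin emp_loss_ge0.
      - by apply/measurable_EFinP; exact: mE.
      - by apply/measurable_EFinP; exact: mef.
      - by move=> w _; rewrite lee_fin fmin.
    have Jk := Jf _ (fhF k s0 k0).
    move: J0 Jk Jf.
    case: (\int[P]_w _)%E => [r| |] // r0 _ Jf.
    rewrite lee_fin; apply: lb_le_inf.
      by exists (loss mu (fhat k s0)), (fhat k s0) => //; exact: fhF.
    by move=> _ [f Ff <-]; rewrite -lee_fin; exact: Jf.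
  have mI : measurable_fun setT (fun w => (\1_U w : R)%:E).
    by apply/measurable_EFinP; exact: measurable_indic.
  have mEk : measurable_fun setT (fun w => (emp_loss (D w) (fhat k (D w)))%:E).
    by apply/measurable_EFinP; exact: mE.
  have mCk : measurable_fun setT (fun w => (Chat k (D w))%:E).
    by apply/measurable_EFinP; exact: mC.
  have I1 : (LH <= P U + (\int[P]_w (emp_loss (D w) (fhat k (D w)))%:E
                        + 'E_P[fun w => Chat k (D w)]))%E.
    have eU : P U = (\int[P]_w (\1_U w : R)%:E)%E by rewrite integral_indic // setIT.
    rewrite /LH !eE eU.
    have h0E : forall w, [set: Omega] w -> ((0 : \bar R) <= (emp_loss (D w) (fhat k (D w)))%:E)%E.
      by move=> w _; rewrite lee_fin emp_loss_ge0.
    have h0C : forall w, [set: Omega] w -> ((0 : \bar R) <= (Chat k (D w))%:E)%E.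
      by move=> w _; rewrite lee_fin C0.
    have h0I : forall w, [set: Omega] w -> ((0 : \bar R) <= (\1_U w : R)%:E)%E.
      by move=> w _; rewrite lee_fin.
    rewrite -(ge0_integralD P measurableT h0E mEk h0C mCk).
    have h0S : forall w, [set: Omega] w -> ((0 : \bar R) <=
        (emp_loss (D w) (fhat k (D w)))%:E + (Chat k (D w))%:E)%E.
      by move=> w _; rewrite adde_ge0 ?h0E ?h0C.
    have mS : measurable_fun setT (fun w => (emp_loss (D w) (fhat k (D w)))%:E + (Chat k (D w))%:E)%E.
      exact: emeasurable_funD.
    rewrite -(ge0_integralD P measurableT h0I mI h0S mS).
    apply: ge0_le_integral => //.
    - by move=> w _; rewrite lee_fin; case/andP: (Lh01 (D w)).
    - by apply/measurable_EFinP; exact: mLk.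
    - by apply: emeasurable_funD => //; exact: emeasurable_funD.
    move=> w _; rewrite -!EFinD lee_fin.
    have [Uw|Uw] := pselect (U w).
    + rewrite indicE mem_set //; case/andP: (Lh01 (D w)) => _ h1.
      apply: le_trans h1 _; rewrite lerDl addr_ge0 ?emp_loss_ge0 ?C0 //.
    + rewrite indicE memNset // add0r.
      have nE : ~ E (khat (D w)) w.
        move=> hE; apply: Uw; exists (khat (D w)).-1 => //.
        by rewrite prednK.
      have := khmin (D w) k k0.
      move/negP: nE; rewrite /E /= -ltNge => h1 h2.
      apply: le_trans h2; rewrite -lerBlDl ltW //.
  apply: le_trans I1 _.
  apply: leeD => //; exact: leeD.
have Hk k : (0 < k)%N ->
    (LH - (Lstar mu)%:E - c%:E <= (Lclass mu (F k) - Lstar mu)%:E + 'E_P[fun w => Chat k (D w)])%E.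
  move=> k0; have := H k k0; clear H; rewrite /LH.
  have EC0 : (0 <= 'E_P[fun w => Chat k (D w)])%E.
    by rewrite eE; apply: integral_ge0 => w _; rewrite lee_fin C0.
  move: EC0; case: ('E_P[fun w => Chat k (D w)])%E => [y| |] //;
    case: ('E_P[fun w => loss mu (fhat (khat (D w)) (D w))])%E => [x| |] //=.
  - by rewrite -!EFinD !lee_fin => _ h; lra.
  - by move=> _ _; rewrite !addNye leNye.
  - by move=> _ _; rewrite addey // leey.
rewrite -leeBlDr //; apply: le_ereal_inf_tmp => _ [k k0 <-]; exact: Hk.
Qed.
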